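(* Let $\mathcal{H}_A,\mathcal{H}_1,\mathcal{H}_2$ be finite-dimensional Hilbert spaces and let $\rho$ be a density operator on $\mathcal{H}_A\otimes\mathcal{H}_1\otimes\mathcal{H}_2$. For $k=1,2$ let $\Lambda^{(k)}$ be a positive and trace-preserving linear map on the operators on $\mathcal{H}_k$ (not necessarily completely positive). Let $\{\{M_{a|x}\}_a\}_x$ be a finite collection of POVMs on $\mathcal{H}_A$. Consider the operator $\tilde\rho=(\mathrm{id}_A\otimes\Lambda^{(1)}\otimes\Lambda^{(2)})[\rho]$ and the assemblage with elements $\sigma^{(k)}_{a|x}=\mathrm{tr}_{\mathcal{H}_A,\mathcal{H}_{\neg k}}[(M_{a|x}\otimes\mathbb{I}_1\otimes\mathbb{I}_2)\tilde\rho]$, where $\mathcal{H}_{\neg k}$ denotes the Bob space other than $\mathcal{H}_k$. Then for any finite collections of POVMs $\{\{N^{(1)}_{b_1|y_1}\}_{b_1}\}_{y_1}$ on $\mathcal{H}_1$ and $\{\{N^{(2)}_{b_2|y_2}\}_{b_2}\}_{y_2}$ on $\mathcal{H}_2$, the correlations $$p(a b_1 b_2|x y_1 y_2)=\mathrm{tr}\big[(M_{a|x}\otimes N^{(1)}_{b_1|y_1}\otimes N^{(2)}_{b_2|y_2})\,\tilde\rho\big]$$ admit a quantum realisation.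
   Context: A tripartite conditional distribution $p(a b_1 b_2|x y_1 y_2)$ admits a quantum realisation if there exist Hilbert spaces $\mathcal{K}_A,\mathcal{K}_1,\mathcal{K}_2$, a density operator $\omega$ on $\mathcal{K}_A\otimes\mathcal{K}_1\otimes\mathcal{K}_2$, and POVMs $\{E_{a|x}\}$, $\{F_{b_1|y_1}\}$, $\{G_{b_2|y_2}\}$ on the respective spaces with $p(ab_1b_2|xy_1y_2)=\mathrm{tr}[(E_{a|x}\otimes F_{b_1|y_1}\otimes G_{b_2|y_2})\omega]$. (In the paper, $\tilde\rho$ is interpreted as a state of the toy theory ''Witworld'', in which states are operators that are positive on product effects, and the correlations above are those obtained when the parties measure such a state.) *)

(* Defs.v *)
From HB Require Import structures.
From mathcomp Require Import all_boot all_order all_algebra.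
From mathcomp Require Import mxtens.
Set Implicit Arguments. Unset Strict Implicit. Unset Printing Implicit Defensive.
Import Order.TTheory GRing.Theory Num.Theory.
Local Open Scope ring_scope.

(* Scalars: an arbitrary numeric closed field C (e.g. the complex numbers).
   Finite-dimensional Hilbert spaces are C^n, operators are 'M[C]_n,
   and the tensor product is the Kronecker product  A *t B  (mxtens). *)

Definition adjmx (C : numClosedFieldType) m n (A : 'M[C]_(m, n)) : 'M[C]_(n, m) :=
  (map_mx Num.conj A)^T.

Definition psd (C : numClosedFieldType) n (A : 'M[C]_n) : Prop :=
  forall v : 'cV[C]_n, 0 <= (adjmx v *m A *m v) 0 0.

Definition density (C : numClosedFieldType) n (rho : 'M[C]_n) : Prop :=
  psd rho /\ \tr rho = 1.

Definition povm (C : numClosedFieldType) n (O : finType) (E : O -> 'M[C]_n) : Prop :=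
  (forall o, psd (E o)) /\ \sum_(o : O) E o = 1%:M.

Definition positive_map (C : numClosedFieldType) n (L : 'M[C]_n -> 'M[C]_n) : Prop :=
  forall X, psd X -> psd (L X).

Definition trace_preserving (C : numClosedFieldType) n (L : 'M[C]_n -> 'M[C]_n) : Prop :=
  forall X, \tr (L X) = \tr X.

Definition matunit (C : numClosedFieldType) n (i j : 'I_n) : 'M[C]_n := delta_mx i j.

(* tensor product of two maps on operators, f (x) g, defined on
   'M_(m*n) = operators on C^m (x) C^n by linear extension:
   (f (x) g)[X] = sum_{i,j,k,l} X_{(i,k),(j,l)} f(|i><j|) (x) g(|k><l|). *)
Definition tens_map (C : numClosedFieldType) m n
    (f : 'M[C]_m -> 'M[C]_m) (g : 'M[C]_n -> 'M[C]_n) (X : 'M[C]_(m * n)) : 'M[C]_(m * n) :=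
  \sum_(i < m) \sum_(j < m) \sum_(k < n) \sum_(l < n)
     X (mxtens_index (i, k)) (mxtens_index (j, l)) *: (f (@matunit C m i j) *t g (@matunit C n k l)).

(* quantum realisation of a tripartite conditional distribution
   p a b1 b2 x y1 y2 = p(a b1 b2 | x y1 y2), with (finite-dimensional)
   Hilbert spaces K_A (dim dA), K_1 (dim d1), K_2 (dim d2) ordered as
   (K_A (x) K_1) (x) K_2. *)
Definition quantum_realisation (C : numClosedFieldType)
    (X Y1 Y2 A B1 B2 : finType)
    (p : A -> B1 -> B2 -> X -> Y1 -> Y2 -> C) : Prop :=
  exists (dA d1 d2 : nat) (omega : 'M[C]_(dA * d1 * d2))
         (E : X -> A -> 'M[C]_dA) (F : Y1 -> B1 -> 'M[C]_d1) (G : Y2 -> B2 -> 'M[C]_d2),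
    [/\ density omega,
        (forall x, povm (E x)), (forall y1, povm (F y1)), (forall y2, povm (G y2)) &
        forall a b1 b2 x y1 y2,
          p a b1 b2 x y1 y2 = \tr ((E x a *t F y1 b1 *t G y2 b2) *m omega)].

(* Main.v *)
Require Import Defs.
From HB Require Import structures.
From mathcomp Require Import all_boot all_order all_algebra.
From mathcomp Require Import mxtens sesquilinear spectral.
From mathcomp Require Import ring.
Import Order.TTheory GRing.Theory Num.Theory.
Local Open Scope ring_scope.

Section Aux.
Variable C : numClosedFieldType.

Lemma mul_delta_entry n (A : 'M[C]_n) (i j k l : 'I_n) :
  (A *m delta_mx i j) k l = A k i * (l == j)%:R.
Proof.
rewrite mxE (bigD1 i) //= big1 ?addr0; first by rewrite mxE eqxx.
by move=> m nm; rewrite mxE (negbTE nm) mulr0.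
Qed.
Lemma tr_mul_delta n (A : 'M[C]_n) (i j : 'I_n) : \tr (A *m delta_mx i j) = A j i.
Proof.
rewrite /mxtrace (bigD1 j) //= big1 ?addr0; first by rewrite mul_delta_entry eqxx mulr1.
by move=> k nk; rewrite mul_delta_entry (negbTE nk) mulr0.
Qed.

Lemma trace_ext n (A B : 'M[C]_n) : (forall Y, \tr (A *m Y) = \tr (B *m Y)) -> A = B.
Proof. by move=> H; apply/matrixP => i j; rewrite -!tr_mul_delta H. Qed.

Definition dualm n (L : 'M[C]_n -> 'M[C]_n) (N : 'M[C]_n) : 'M[C]_n :=
  \matrix_(i, j) \tr (N *m L (delta_mx j i)).
Arguments dualm {n}.

Lemma dualmE n (L : {linear 'M[C]_n -> 'M[C]_n}) (N Y : 'M[C]_n) :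
  \tr (dualm L N *m Y) = \tr (N *m L Y).
Proof.
rewrite {1 2}(matrix_sum_delta Y) mulmx_sumr (linear_sum L) mulmx_sumr !raddf_sum.
apply: eq_bigr => i _; rewrite mulmx_sumr (linear_sum L) mulmx_sumr !raddf_sum.
apply: eq_bigr => j _; by rewrite linearZ /= mxtraceZ linearZ /= -scalemxAr mxtraceZ tr_mul_delta mxE.
Qed.

Lemma mxtrace_tens m n (A : 'M[C]_m) (B : 'M[C]_n) : \tr (A *t B) = \tr A * \tr B.
Proof. by rewrite /mxtrace mulr_sum; apply: eq_bigr => i _; rewrite mxE. Qed.

Lemma sum_tens (V : zmodType) m n (F : 'I_(m * n) -> V) :
  \sum_(r < m * n) F r = \sum_(i < m) \sum_(k < n) F (mxtens_index (i, k)).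
Proof.
rewrite pair_big /= (reindex (@mxtens_index m n)) /=; last first.
  by exists (@mxtens_unindex m n) => x _; rewrite (mxtens_indexK, mxtens_unindexK).
by apply: eq_bigr => -[i k] _.
Qed.

Lemma delta_tens m n (i j : 'I_m) (k l : 'I_n) :
  delta_mx i j *t delta_mx k l = delta_mx (mxtens_index (i, k)) (mxtens_index (j, l)) :> 'M[C]_(m * n).
Proof.
apply/matrixP => r s; case: (mxtens_indexP r) => i0 k0; case: (mxtens_indexP s) => j0 l0.
rewrite tensmxE !mxE !(inj_eq (can_inj (@mxtens_indexK _ _))) !xpair_eqE.
by case: (i0 == i); case: (j0 == j); case: (k0 == k); case: (l0 == l); rewrite /= ?mulr1 ?mulr0.
Qed.

Lemma tens_map_id m n (X : 'M[C]_(m * n)) : tens_map id id X = X.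
Proof.
rewrite {2}(matrix_sum_delta X) sum_tens /tens_map /=.
apply: eq_bigr => i _; rewrite exchange_big /=; apply: eq_bigr => k _.
rewrite sum_tens; apply: eq_bigr => j _; apply: eq_bigr => l _.
by rewrite /matunit delta_tens.
Qed.

Lemma tr_tens_map m n (f : 'M[C]_m -> 'M[C]_m) (g : 'M[C]_n -> 'M[C]_n) P P' Q Q' X :
  (forall Y, \tr (P *m f Y) = \tr (P' *m Y)) ->
  (forall Y, \tr (Q *m g Y) = \tr (Q' *m Y)) ->
  \tr ((P *t Q) *m tens_map f g X) = \tr ((P' *t Q') *m X).
Proof.
move=> Hf Hg; rewrite -{2}(tens_map_id _ _ X) /tens_map.
rewrite !mulmx_sumr !raddf_sum; apply: eq_bigr => i _.
rewrite !mulmx_sumr !raddf_sum; apply: eq_bigr => j _.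
rewrite !mulmx_sumr !raddf_sum; apply: eq_bigr => k _.
rewrite !mulmx_sumr !raddf_sum; apply: eq_bigr => l _.
by rewrite -!scalemxAr /= !mxtraceZ !tensmx_mul !mxtrace_tens Hf Hg.
Qed.

End Aux.
Arguments dualm {C n}.

Section Psd.
Variable C : numClosedFieldType.

Lemma adjmxE m n (A : 'M[C]_(m, n)) i j : adjmx A i j = (A j i)^*.
Proof. by rewrite !mxE. Qed.

Lemma adjmx_mul m n p (A : 'M[C]_(m, n)) (B : 'M[C]_(n, p)) :
  adjmx (A *m B) = adjmx B *m adjmx A.
Proof. by rewrite /adjmx map_mxM trmx_mul. Qed.

Lemma adjmxK m n (A : 'M[C]_(m, n)) : adjmx (adjmx A) = A.
Proof. by apply/matrixP => i j; rewrite !adjmxE conjCK. Qed.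

Lemma qform_tr n (A : 'M[C]_n) (v : 'cV[C]_n) :
  (adjmx v *m A *m v) 0 0 = \tr (A *m (v *m adjmx v)).
Proof.
by rewrite mulmxA mxtrace_mulC mulmxA /mxtrace big_ord1.
Qed.

Lemma psd_rank1 n (v : 'cV[C]_n) : psd (v *m adjmx v).
Proof.
move=> w; rewrite !mulmxA -[adjmx w *m v *m adjmx v *m w]mulmxA.
set x := adjmx w *m v.
have -> : adjmx v *m w = adjmx x by rewrite /x adjmx_mul adjmxK.
rewrite mxE big_ord1 adjmxE; exact: mul_conjC_ge0.
Qed.

Lemma psd_conj n (Z : 'M[C]_n) (P : 'M[C]_n) i : psd Z -> 0 <= (P *m Z *m adjmx P) i i.
Proof.
move=> /(_ (adjmx (row i P))); rewrite adjmxK.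
suff -> : (row i P *m Z *m adjmx (row i P)) 0 0 = (P *m Z *m adjmx P) i i by [].
rewrite !mxE; apply: eq_bigr => k _; rewrite !mxE; congr (_ * _).
by apply: eq_bigr => l _; rewrite !mxE; congr (_ * _); apply: eq_bigr => r _; rewrite !mxE.
Qed.


Lemma qform_delta n (A : 'M[C]_n) (i j : 'I_n) :
  (adjmx (delta_mx i 0 : 'cV[C]_n) *m A *m (delta_mx j 0 : 'cV[C]_n)) 0 0 = A i j.
Proof.
have -> : adjmx (delta_mx i 0 : 'cV[C]_n) = (delta_mx 0 i : 'rV[C]_n).
  by apply/matrixP => r s; rewrite adjmxE !mxE ord1 eqxx andbT rmorph_nat.
by rewrite -(rowE i A) -colE !mxE.
Qed.

Lemma qform_delta_mx n (A : 'M[C]_n) (i j : 'I_n) :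
  adjmx (delta_mx i 0 : 'cV[C]_n) *m A *m (delta_mx j 0 : 'cV[C]_n) = (A i j)%:M.
Proof. by apply/matrixP => r s; rewrite !ord1 qform_delta mxE eqxx mulr1n. Qed.

Lemma adjmx_lin n (a b : C) (u w : 'cV[C]_n) :
  adjmx (a *: u + b *: w) = a^* *: adjmx u + b^* *: adjmx w.
Proof. by apply/matrixP => r s; rewrite !mxE rmorphD !rmorphM. Qed.

Lemma qform2 n (A : 'M[C]_n) (a b : C) (i j : 'I_n) :
  let v := a *: (delta_mx i 0 : 'cV[C]_n) + b *: (delta_mx j 0 : 'cV[C]_n) in
  (adjmx v *m A *m v) 0 0 =
  a^* * a * A i i + a^* * b * A i j + b^* * a * A j i + b^* * b * A j j.
Proof.
rewrite /= adjmx_lin !mulmxDl !mulmxDr -!scalemxAl -!scalemxAr !qform_delta_mx !mxE !eqxx !mulr1n.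
ring.
Qed.

Lemma psd_herm n (A : 'M[C]_n) : psd A -> forall i j, (A j i)^* = A i j.
Proof.
move=> HA.
have R (v : 'cV[C]_n) : ((adjmx v *m A *m v) 0 0)^* = (adjmx v *m A *m v) 0 0.
  by apply: conj_Creal; apply: ger0_real; exact: (HA v).
move=> i j.
have Rd k : (A k k)^* = A k k.
  have := R (1 *: delta_mx k 0 + 0 *: delta_mx k 0).
  by rewrite qform2 conjC1 conjC0 !mul1r !mul0r !addr0.
have H1 := R (1 *: delta_mx i 0 + 1 *: delta_mx j 0).
rewrite qform2 conjC1 !mul1r !rmorphD /= !Rd in H1.
have H2 := R (1 *: delta_mx i 0 + 'i *: delta_mx j 0).
have ci : (- 'i)^* = 'i :> C by rewrite rmorphN /= conjCi opprK.
rewrite qform2 conjC1 !mul1r !rmorphD /= !rmorphM /= conjCi !Rd !ci conjC1 !mulr1 in H2.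
move: H1 H2.
set s := A i i; set t := A j j; set x := A i j; set y := A j i.
move=> H1 H2.
have E : 'i *+ 2 * (y^* - x) = 'i * ((s + x^* + y^* + t) - (s + x + y + t)) +
   ((s + - 'i * x^* + 'i * y^* + 'i * - 'i * t) - (s + 'i * x + - 'i * y + - 'i * 'i * t)).
  ring.
rewrite H1 H2 !subrr mulr0 addr0 in E.
apply/eqP; rewrite -subr_eq0; apply/eqP.
move/eqP: E; rewrite mulf_eq0 mulrn_eq0 /= (negbTE (neq0Ci C)) /=.
by move/eqP.
Qed.


Lemma adj_tC n (A : 'M[C]_n) : adjmx A = (A ^t Num.conj)%sesqui.
Proof. by apply/matrixP => i j; rewrite !mxE. Qed.

Lemma trace_psd n (N Z : 'M[C]_n) : psd N -> psd Z -> 0 <= \tr (N *m Z).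
Proof.
move=> HN HZ.
have Ht : map_mx Num.conj N^T = N.
  by apply/matrixP => i j; rewrite !mxE (psd_herm _ _ HN).
have Hn : N \is normalmx.
  by apply/normalmxP; rewrite Ht.
have U := spectral_unitarymx N.
have /orthomx_spectralP E := Hn.
set P := spectralmx N in U E; set d := spectral_diag N in E.
have PP : P *m adjmx P = 1%:M by rewrite adj_tC; apply/unitarymxP.
have Hd : diag_mx d = P *m N *m adjmx P.
  rewrite {1}E invmx_unitary // -adj_tC !mulmxA PP mul1mx -mulmxA PP mulmx1 //.
rewrite E invmx_unitary // -adj_tC -!mulmxA mxtrace_mulC -!mulmxA.
rewrite mul_diag_mx /mxtrace; apply: sumr_ge0 => i _; rewrite mxE.
apply: mulr_ge0.
  have -> : d 0 i = diag_mx d i i by rewrite mxE eqxx mulr1n.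
  by rewrite Hd; apply: psd_conj.
by rewrite !mulmxA; apply: psd_conj.
Qed.

End Psd.

Section Final.
Variable C : numClosedFieldType.

Lemma dualm_psd n (L : {linear 'M[C]_n -> 'M[C]_n}) :
  positive_map L -> forall N, psd N -> psd (dualm L N).
Proof.
move=> HL N HN v; rewrite qform_tr dualmE; apply: trace_psd => //.
by apply: HL; apply: psd_rank1.
Qed.

Lemma dualm_povm n (L : {linear 'M[C]_n -> 'M[C]_n}) (O : finType) (E : O -> 'M[C]_n) :
  positive_map L -> trace_preserving L -> povm E -> povm (fun o => dualm L (E o)).
Proof.
move=> HLp HLt [HE1 HE2]; split; first by move=> o; apply: dualm_psd.
apply: trace_ext => Y; rewrite mulmx_suml raddf_sum /=.
under eq_bigr do rewrite dualmE.
by rewrite -raddf_sum /= -mulmx_suml HE2 !mul1mx HLt.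
Qed.

End Final.

Theorem proposition1 (C : numClosedFieldType) (nA n1 n2 : nat)
  (rho : 'M[C]_(nA * n1 * n2)) (Hrho : density rho)
  (L1 : {linear 'M[C]_n1 -> 'M[C]_n1}) (L2 : {linear 'M[C]_n2 -> 'M[C]_n2})
  (HL1p : positive_map L1) (HL1t : trace_preserving L1)
  (HL2p : positive_map L2) (HL2t : trace_preserving L2)
  (X A : finType) (M : X -> A -> 'M[C]_nA) (HM : forall x, povm (M x))
  (Y1 B1 Y2 B2 : finType)
  (N1 : Y1 -> B1 -> 'M[C]_n1) (HN1 : forall y1, povm (N1 y1))
  (N2 : Y2 -> B2 -> 'M[C]_n2) (HN2 : forall y2, povm (N2 y2)) :
  let rho_t := tens_map (tens_map id L1) L2 rho in
  quantum_realisation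
    (fun (a : A) (b1 : B1) (b2 : B2) (x : X) (y1 : Y1) (y2 : Y2) =>
       \tr ((M x a *t N1 y1 b1 *t N2 y2 b2) *m rho_t)).
Proof.
move=> rho_t.
exists nA, n1, n2, rho, M, (fun y b => dualm L1 (N1 y b)), (fun y b => dualm L2 (N2 y b)).
split => //.
- by move=> y1; apply: dualm_povm.
- by move=> y2; apply: dualm_povm.
move=> a b1 b2 x y1 y2; rewrite /rho_t.
apply: tr_tens_map; last by move=> Y; rewrite dualmE.
by move=> Y; apply: tr_tens_map => // Y'; rewrite dualmE.
Qed.
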